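(* Let $L$ be an oriented, ordered virtual link diagram with affine bilabeling $C$. Let $L_i$ be a component of weight $n$ whose starting point $s$ carries bilabel $(a_1,a_2)$. Let $c$ be the first classical crossing met by $L_i$ after $s$, and suppose $c$ is a self-crossing of $L_i$. Let $\iota\in\{\pm1\}$ be the index change of this passage of $L_i$ through $c$. Let $C'$ be obtained by moving the starting point of $L_i$ forward to a point $s'$ just past this passage through $c$, with the same starting bilabel, and keeping everything else the same. Then: - the weight of $c$ changes by $+n$ if the passage is the overstrand of $c$, and by $-n$ if it is the understrand; and - all other labels of $L_i$ (those not on the segment between $s$ and $s'$) shift by $-\iota$, the opposite of the index change.
   Context: **Diagrams.** A virtual link diagram is an oriented planar diagram of ordered closed curves $L_1,\dots,L_n$ (components) with classical and virtual crossings. **Crossing conventions.** Draw a classical crossing with both strands oriented upward. - The bottom-left-to-top-right strand has index change $-1$; the bottom-right-to-top-left strand has index change $+1$. - The crossing is positive if the overstrand is the bottom-left-to-top-right strand, and negative otherwise. - Self-crossings have both strands on one component; external crossings have strands on different components. - The weight of a component $L_i$ is the sum of the index changes of $L_i$ over its passages through external classical crossings. **Affine bilabeling.** - Each component gets a starting point with bilabel $(a^{(i)}_1,a^{(i)}_2)$ of formal integer variables. - The bilabel is carried along the component in its orientation and is unchanged at virtual crossings. - At a classical crossing with index change $\varepsilon$, the first entry changes by $\varepsilon$ at a self-crossing, and the second entry changes by $\varepsilon$ at an external crossing. - On returning to the starting point, the label is off by the component's weight in the second entry; this discrepancy is placed at the starting point. **Crossing weight.** For $|(x,y)|=x+y$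 and $c$ drawn with both strands upward: - if $c$ is positive, $W(c)=|\text{bottom-left}|-|\text{top-left}|$; - if $c$ is negative, $W(c)=|\text{bottom-right}|-|\text{top-right}|$. *)

(* Defs.v *)
(* Virtual crossings carry no data (bilabels are
   unchanged there), so a component is recorded as the cyclic sequence of its
   passages through classical crossings, read in the orientation starting at
   its starting point. *)
From mathcomp Require Import all_boot all_order all_algebra.
Set Implicit Arguments. Unset Strict Implicit. Unset Printing Implicit Defensive.
Import GRing.Theory Num.Theory.
Local Open Scope ring_scope.

(* Draw c with both strands
   oriented upward; (c, true) is the passage along the bottom-left-to-top-right
   strand, (c, false) the passage along the bottom-right-to-top-left strand. *)
Definition passage (N : nat) := ('I_N * bool)%type.

Section VirtualDiagrams.
Variables (m N : nat).
(* comp i : passages of component L_i, in order, starting from its starting point *)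
Variable comp : 'I_m -> seq (passage N).
(* pos c = true iff the overstrand of c is the bottom-left-to-top-right strand,
   i.e. iff c is a positive crossing *)
Variable pos : 'I_N -> bool.

Definition wf_diagram : Prop :=
  forall p : passage N, (\sum_(i < m) count_mem p (comp i))%N = 1%N.

Definition idx_change (p : passage N) : int := if p.2 then -1 else 1.

Definition is_over (p : passage N) : bool := p.2 == pos p.1.

Definition comp_of (p : passage N) : option 'I_m := [pick i | p \in comp i].

Definition is_self (c : 'I_N) : bool :=
  match comp_of (c, true), comp_of (c, false) with
  | Some i, Some j => i == j
  | _, _ => false
  end.

Definition comp_weight (i : 'I_m) : int :=
  \sum_(p <- comp i | ~~ is_self p.1) idx_change p.

(* Affine bilabeling with formal integer variables a1 i, a2 i (starting bilabel
   of L_i).  Segment k of L_i (0 <= k <= size (comp i)) is the part of L_i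
   between passage k-1 and passage k; segment 0 starts at the starting point
   and segment (size (comp i)) ends at the starting point (it carries the
   discrepancy). *)
Definition label (a1 a2 : 'I_m -> int) (i : 'I_m) (k : nat) : int * int :=
  (a1 i + \sum_(p <- take k (comp i) | is_self p.1) idx_change p,
   a2 i + \sum_(p <- take k (comp i) | ~~ is_self p.1) idx_change p).

Definition bl_norm (x : int * int) : int := x.1 + x.2.

Definition label_in (a1 a2 : 'I_m -> int) (p : passage N) : int * int :=
  if comp_of p is Some i then label a1 a2 i (index p (comp i)) else (0, 0).
Definition label_out (a1 a2 : 'I_m -> int) (p : passage N) : int * int :=
  if comp_of p is Some i then label a1 a2 i (index p (comp i)).+1 else (0, 0).

(* W(c): positive: |bottom-left| - |top-left|; negative: |bottom-right| - |top-right| *)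
Definition crossing_weight (a1 a2 : 'I_m -> int) (c : 'I_N) : int :=
  if pos c then bl_norm (label_in a1 a2 (c, true)) - bl_norm (label_out a1 a2 (c, false))
  else bl_norm (label_in a1 a2 (c, false)) - bl_norm (label_out a1 a2 (c, true)).

Definition move_start (i0 : 'I_m) : 'I_m -> seq (passage N) :=
  fun i => if i == i0 then rot 1 (comp i) else comp i.

End VirtualDiagrams.

(* Main.v *)
Require Import Defs.
From mathcomp Require Import all_boot all_order all_algebra zify ring.
Import GRing.Theory Num.Theory.
Local Open Scope ring_scope.
Set Implicit Arguments. Unset Strict Implicit.

Section Aux.
Variables (m N : nat) (comp : 'I_m -> seq (passage N)).
Hypothesis hwf : wf_diagram comp.

Lemma cnt_pos (p : passage N) i : p \in comp i -> (0 < count_mem p (comp i))%N.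
Proof. by move=> hi; rewrite lt0n; apply: contraL hi => /eqP/count_memPn. Qed.

Lemma mem_uniq_comp p i j : p \in comp i -> p \in comp j -> i = j.
Proof.
move=> hi hj; apply/eqP; apply/negPn/negP => hne.
have := hwf p; rewrite (bigD1 i) //= (bigD1 j) /=; last by rewrite eq_sym.
have := cnt_pos hi; have := cnt_pos hj. move: (count_mem p (comp i)) (count_mem p (comp j)) (\sum_(i0 < m | _) _) => a b c; lia.
Qed.

Lemma uniq_comp i : uniq (comp i).
Proof.
apply: count_mem_uniq => x.
have := hwf x; rewrite (bigD1 i) //= => h.
case hx: (x \in comp i).
  have := cnt_pos hx; move: h; rewrite /=; move: (count_mem x (comp i)) (\sum_(i0 < m | _) _) => a b; lia.
by apply/count_memPn; rewrite hx.
Qed.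

Lemma comp_ofE p i : p \in comp i -> comp_of comp p = Some i.
Proof.
move=> hi; rewrite /comp_of; case: pickP => [j hj | h].
  by congr Some; exact: mem_uniq_comp hj hi.
by have := h i; rewrite hi.
Qed.

Lemma self_mem d bb i : is_self comp d -> (d, bb) \in comp i -> (d, ~~ bb) \in comp i.
Proof.
rewrite /is_self => hs hin.
case: bb hin hs => hin; rewrite (comp_ofE hin) /comp_of; case: pickP => [j hj|] //=;
  by move/eqP=> e; subst.
Qed.

Definition flip (p : passage N) : passage N := (p.1, ~~ p.2).
Lemma flipK : involutive flip.
Proof. by case=> d bb; rewrite /flip /= negbK. Qed.

Lemma self_sum0 i : \sum_(p <- comp i | is_self comp p.1) idx_change p = 0.
Proof.
rewrite -big_filter; set s := filter _ _.
have cl x : x \in s -> flip x \in s.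
  case: x => d bb; rewrite !mem_filter /= => /andP[hs hin].
  by rewrite hs self_mem.
have hp : perm_eq s (map flip s).
  apply: uniq_perm.
  - by rewrite filter_uniq // uniq_comp.
  - by rewrite (map_inj_uniq (can_inj flipK)) filter_uniq // uniq_comp.
  move=> x; apply/idP/idP.
    by move=> hx; rewrite -[x]flipK; apply: map_f; apply: cl.
  by case/mapP=> y hy ->; apply: cl.
have h : \sum_(p <- s) idx_change p = - \sum_(p <- s) idx_change p.
  rewrite {1}(perm_big _ hp) big_map -sumrN; apply: eq_bigr => -[d bb] _.
  by rewrite /idx_change /=; case: bb; rewrite ?opprK.
move: h; move: (\sum_(p <- s) _) => x; lia.
Qed.

Lemma comp_of_eq (comp2 : 'I_m -> seq (passage N)) :
  (forall j, comp2 j =i comp j) -> forall p, comp_of comp2 p = comp_of comp p.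
Proof. by move=> h p; rewrite /comp_of; apply: eq_pick => j; rewrite /= h. Qed.

Lemma is_self_eq (comp2 : 'I_m -> seq (passage N)) :
  (forall j, comp2 j =i comp j) -> forall d, is_self comp2 d = is_self comp d.
Proof. by move=> h d; rewrite /is_self !(comp_of_eq h). Qed.
End Aux.

Theorem lemma2 (m N : nat) (comp : 'I_m -> seq (passage N)) (pos : 'I_N -> bool)
  (a1 a2 : 'I_m -> int) (hwf : wf_diagram comp)
  (i : 'I_m) (c : 'I_N) (b : bool) (rest : seq (passage N))
  (hfirst : comp i = (c, b) :: rest) (hself : is_self comp c) :
  let n := comp_weight comp i in
  let iota := idx_change (c, b) in
  let comp' := move_start comp i in
  crossing_weight comp' pos a1 a2 c
    = crossing_weight comp pos a1 a2 c + (if is_over pos (c, b) then n else - n)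
  /\ forall k : nat, (1 <= k <= size (comp i))%N ->
       label comp' a1 a2 i k.-1
         = ((label comp a1 a2 i k).1 - iota, (label comp a1 a2 i k).2).
Proof.
move=> n iota comp'.
have hmem : forall j, comp' j =i comp j.
  by move=> j x; rewrite /comp' /move_start; case: eqP => // ->; rewrite mem_rot.
have hci : comp' i = rest ++ [:: (c, b)].
  by rewrite /comp' /move_start eqxx hfirst rot1_cons cats1.
have hcb : (c, b) \in comp i by rewrite hfirst mem_head.
have hq : (c, ~~ b) \in comp i by apply: self_mem.
have hqr : (c, ~~ b) \in rest.
  by move: hq; rewrite hfirst in_cons xpair_eqE eqxx /=; case: b {hcb hfirst iota n comp' hmem hci}.
have hcbr : (c, b) \notin rest.
  by have := uniq_comp hwf i; rewrite hfirst cons_uniq => /andP[].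
have hS1 : \sum_(p <- rest | is_self comp p.1) idx_change p = - iota.
  have := self_sum0 hwf i; rewrite hfirst big_cons /= hself => h.
  by apply/eqP; rewrite -addr_eq0 addrC; apply/eqP.
have hS2 : \sum_(p <- rest | ~~ is_self comp p.1) idx_change p = n.
  by rewrite /n /comp_weight hfirst big_cons /= hself.
have hlab : forall k, label comp' a1 a2 i k =
   (a1 i + \sum_(p <- take k (rest ++ [:: (c, b)]) | is_self comp p.1) idx_change p,
    a2 i + \sum_(p <- take k (rest ++ [:: (c, b)]) | ~~ is_self comp p.1) idx_change p).
  move=> k; rewrite /label hci; congr (_ + _, _ + _); apply: eq_bigl => p;
  by rewrite (is_self_eq hmem).
split; last first.
  move=> k /andP[k1 kle]; rewrite hlab /label hfirst.
  have -> : k = k.-1.+1 by rewrite prednK.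
  rewrite /= takel_cat; last by move: kle; rewrite hfirst /=; case: k k1.
  rewrite !big_cons /= hself /=; congr (_, _); ring.
have hco : forall bb, comp_of comp (c, bb) = Some i.
  move=> bb; apply: (comp_ofE hwf); move: hcb hq; case: bb; case: (b) => //= _ _; by [].
have hi3' : true by [].
have hi1 : index (c, b) (comp i) = 0%N by rewrite hfirst /= eqxx.
have hi2 : index (c, b) (comp' i) = size rest by rewrite hci index_cat (negbTE hcbr) /= eqxx addn0.
have hi3 : index (c, ~~ b) (comp i) = (index (c, ~~ b) rest).+1.
  by rewrite hfirst /index /= xpair_eqE eqxx /=; case: (b).
have hi4 : index (c, ~~ b) (comp' i) = index (c, ~~ b) rest by rewrite hci index_cat hqr.
have hjs : (index (c, ~~ b) rest < size rest)%N by rewrite index_mem.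
have ht1 : take (size rest) (rest ++ [:: (c, b)]) = rest by rewrite take_size_cat.
have ht2 : take (size rest).+1 (rest ++ [:: (c, b)]) = rest ++ [:: (c, b)] by rewrite take_oversize // size_cat addn1.
have ht3 : take (index (c, ~~ b) rest) (rest ++ [:: (c, b)]) = take (index (c, ~~ b) rest) rest by rewrite takel_cat // ltnW.
have ht4 : take (index (c, ~~ b) rest).+1 (rest ++ [:: (c, b)]) = take (index (c, ~~ b) rest).+1 rest by rewrite takel_cat.
rewrite /crossing_weight /label_in /label_out !(comp_of_eq hmem) !hco.
move: hi1 hi2 hi3 hi4 ht1 ht2 ht3 ht4 hS1 hlab.
rewrite /iota /is_over; clear iota hci hcb hq hqr hcbr hjs hco; case: b hfirst => hfirst hi1 hi2 hi3 hi4 ht1 ht2 ht3 ht4 hS1 hlab; move: hi1 hi2 hi3 hi4 ht1 ht2 ht3 ht4 hS1; rewrite /= => -> -> -> -> ; rewrite !hlab /label hfirst /= => -> -> -> -> hS1.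
all: rewrite ?big_cat ?big_cons ?big_nil /= ?hself /= ?big_nil ?hS1 ?hS2 /bl_norm /=.
all: case: (pos c) => /=.
all: rewrite ?take0 ?big_nil /idx_change /=; ring.
Qed.
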